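(* For $\tau$ in the upper half plane, with $\eta=\eta(\tau)$: $$\theta_2(0|\tfrac{2\tau}{3})\theta_3(0|6\tau)-\theta_3(0|\tfrac{2\tau}{3})\theta_2(0|6\tau)=2\eta^2,$$ $$\theta_4(0|\tfrac{3\tau}{2})\theta_3(0|\tfrac{\tau}{6})-\theta_3(0|\tfrac{3\tau}{2})\theta_4(0|\tfrac{\tau}{6})=4\eta^2.$$
   Context: With $q^s=e^{2\pi i s\tau}$: $\theta_2(0|\tau)=\sum_{n\in\mathbb{Z}} q^{(n+1/2)^2/2}$, $\theta_3(0|\tau)=\sum_{n} q^{n^2/2}$, $\theta_4(0|\tau)=\sum_{n}(-1)^n q^{n^2/2}$; $\eta(\tau)=q^{1/24}\prod_{n\ge1}(1-q^n)$. *)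

(* Defs.v *)
From Stdlib Require Import Reals ZArith.
From Coquelicot Require Import Coquelicot.
Open Scope R_scope.

Definition cexp (z : C) : C :=
  (exp (Re z) * cos (Im z), exp (Re z) * sin (Im z)).

Definition qpow (tau : C) (s : R) : C :=
  cexp (Cmult (Cmult (RtoC (2 * PI * s)) Ci) tau).

Fixpoint zpsum (a : Z -> C) (N : nat) : C :=
  match N with
  | O => a 0%Z
  | S k => Cplus (Cplus (zpsum a k) (a (Z.of_nat (S k)))) (a (- Z.of_nat (S k))%Z)
  end.

Definition Clim (u : nat -> C) : C :=
  (real (Lim_seq (fun N => Re (u N))), real (Lim_seq (fun N => Im (u N)))).

(* sum over n in Z (absolutely convergent in all uses below) *)
Definition zsum (a : Z -> C) : C := Clim (zpsum a).

Definition theta2 (tau : C) : C :=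
  zsum (fun n => qpow tau ((IZR n + 1/2) ^ 2 / 2)).
Definition theta3 (tau : C) : C :=
  zsum (fun n => qpow tau (IZR n ^ 2 / 2)).
Definition theta4 (tau : C) : C :=
  zsum (fun n => Cmult (RtoC ((-1) ^ Z.abs_nat n)) (qpow tau (IZR n ^ 2 / 2))).

Fixpoint eta_pprod (tau : C) (N : nat) : C :=
  match N with
  | O => RtoC 1
  | S k => Cmult (eta_pprod tau k) (Cminus (RtoC 1) (qpow tau (INR (S k))))
  end.

Definition eta (tau : C) : C :=
  Cmult (qpow tau (1/24)) (Clim (eta_pprod tau)).

(* Main.v *)
Require Import Defs.
From Stdlib Require Import Reals ZArith Lia Lra List Bool.
From Coquelicot Require Import Coquelicot.
Import ListNotations.
Open Scope R_scope.

Lemma Ceq (a b : C) : Re a = Re b -> Im a = Im b -> a = b.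
Proof. destruct a, b; simpl; intros; subst; reflexivity. Qed.

Lemma cexp_add (a b : C) : cexp (a + b)%C = (cexp a * cexp b)%C.
Proof.
  unfold cexp; apply Ceq; unfold Re, Im; simpl; rewrite exp_plus; try rewrite cos_plus; try rewrite sin_plus; ring.
Qed.

Lemma cexp_0 : cexp (RtoC 0) = RtoC 1.
Proof. unfold cexp; apply Ceq; unfold Re, Im; simpl; rewrite exp_0; try rewrite cos_0; try rewrite sin_0; ring. Qed.

Lemma cexp_nat (n : nat) (z : C) : cexp (RtoC (INR n) * z) = (cexp z ^ n)%C.
Proof.
  induction n as [|n IH].
  - simpl. replace (RtoC 0 * z)%C with (RtoC 0) by ring. apply cexp_0.
  - rewrite S_INR, RtoC_plus. replace ((RtoC (INR n) + RtoC 1) * z)%C with (z + RtoC (INR n) * z)%C by ring.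
    rewrite cexp_add, IH. simpl. reflexivity.
Qed.

Lemma Cmod_cexp (z : C) : Cmod (cexp z) = exp (Re z).
Proof.
  unfold cexp, Cmod; simpl.
  assert (H := sin2_cos2 (Im z)); unfold Rsqr in H.
  replace (exp (Re z) * cos (Im z) * (exp (Re z) * cos (Im z) * 1) +
     exp (Re z) * sin (Im z) * (exp (Re z) * sin (Im z) * 1))
     with ((exp (Re z))^2 * (sin (Im z) * sin (Im z) + cos (Im z) * cos (Im z))) by ring.
  rewrite H, Rmult_1_r.
  apply sqrt_pow2. left; apply exp_pos.
Qed.

Lemma im_le_Cmod (c : C) : Rabs (Im c) <= Cmod c.
Proof.
  unfold Cmod. rewrite <- sqrt_Rsqr_abs. apply sqrt_le_1_alt.
  unfold Rsqr, Im. simpl. pose proof (pow2_ge_0 (fst c)). nra.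
Qed.

Definition csum {A} (l : list A) (f : A -> C) : C :=
  fold_right (fun a s => (f a + s)%C) (RtoC 0) l.
Definition zsumL {A} (l : list A) (f : A -> Z) : Z :=
  fold_right (fun a s => (f a + s)%Z) 0%Z l.
Definition rsum {A} (l : list A) (f : A -> R) : R :=
  fold_right (fun a s => f a + s) 0 l.

Lemma csum_app {A} (l1 l2 : list A) f : csum (l1 ++ l2) f = (csum l1 f + csum l2 f)%C.
Proof. induction l1; simpl. ring. rewrite IHl1. ring. Qed.
Lemma zsumL_app {A} (l1 l2 : list A) f : zsumL (l1 ++ l2) f = (zsumL l1 f + zsumL l2 f)%Z.
Proof. induction l1; simpl. ring. rewrite IHl1. ring. Qed.
Lemma rsum_app {A} (l1 l2 : list A) f : rsum (l1 ++ l2) f = rsum l1 f + rsum l2 f.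
Proof. induction l1; simpl. ring. rewrite IHl1. ring. Qed.
Lemma csum_ext {A} (l : list A) f g : (forall a, In a l -> f a = g a) -> csum l f = csum l g.
Proof. induction l; simpl; intros H. auto. rewrite H by auto. rewrite IHl; auto. Qed.
Lemma zsumL_ext {A} (l : list A) f g : (forall a, In a l -> f a = g a) -> zsumL l f = zsumL l g.
Proof. induction l; simpl; intros H. auto. rewrite H by auto. rewrite IHl; auto. Qed.
Lemma rsum_ext {A} (l : list A) f g : (forall a, In a l -> f a = g a) -> rsum l f = rsum l g.
Proof. induction l; simpl; intros H. auto. rewrite H by auto. rewrite IHl; auto. Qed.
Lemma csum_plus {A} (l : list A) f g : csum l (fun a => f a + g a)%C = (csum l f + csum l g)%C.
Proof. induction l; simpl. ring. rewrite IHl. ring. Qed.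
Lemma zsumL_plus {A} (l : list A) f g : zsumL l (fun a => f a + g a)%Z = (zsumL l f + zsumL l g)%Z.
Proof. induction l; simpl. ring. rewrite IHl. ring. Qed.
Lemma zsumL_opp {A} (l : list A) f : zsumL l (fun a => - f a)%Z = (- zsumL l f)%Z.
Proof. induction l; simpl. ring. rewrite IHl. ring. Qed.
Lemma zsumL_scal {A} (l : list A) c f : zsumL l (fun a => c * f a)%Z = (c * zsumL l f)%Z.
Proof. induction l; simpl. ring. rewrite IHl. ring. Qed.
Lemma csum_scal {A} (l : list A) c f : csum l (fun a => c * f a)%C = (c * csum l f)%C.
Proof. induction l; simpl. ring. rewrite IHl. ring. Qed.
Lemma zsumL_0 {A} (l : list A) f : (forall a, In a l -> f a = 0%Z) -> zsumL l f = 0%Z.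
Proof. induction l; simpl; intros H. auto. rewrite H, IHl; auto. Qed.
Lemma zsumL_map {A B} (l : list A) (g : A -> B) f : zsumL (map g l) f = zsumL l (fun a => f (g a)).
Proof. induction l; simpl; auto. rewrite IHl; auto. Qed.
Lemma csum_map {A B} (l : list A) (g : A -> B) f : csum (map g l) f = csum l (fun a => f (g a)).
Proof. induction l; simpl; auto. rewrite IHl; auto. Qed.
Lemma rsum_map {A B} (l : list A) (g : A -> B) f : rsum (map g l) f = rsum l (fun a => f (g a)).
Proof. induction l; simpl; auto. rewrite IHl; auto. Qed.

Lemma Cmod_csum {A} (l : list A) f : Cmod (csum l f) <= rsum l (fun a => Cmod (f a)).
Proof.
  induction l; simpl. rewrite Cmod_0; lra.
  eapply Rle_trans. apply Cmod_triangle. lra.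
Qed.

Lemma rsum_le {A} (l : list A) f g : (forall a, In a l -> f a <= g a) -> rsum l f <= rsum l g.
Proof. induction l; simpl; intros H. lra. pose proof (H a (or_introl eq_refl)). pose proof (IHl (fun b Hb => H b (or_intror Hb))). lra. Qed.
Lemma rsum_scal {A} (l : list A) c f : rsum l (fun a => c * f a) = c * rsum l f.
Proof. induction l; simpl. ring. rewrite IHl. ring. Qed.
Lemma rsum_const {A} (l : list A) c : rsum l (fun _ => c) = INR (length l) * c.
Proof. induction l; simpl. ring. rewrite IHl. destruct (length l); simpl; ring. Qed.
Lemma rsum_nonneg {A} (l : list A) f : (forall a, In a l -> 0 <= f a) -> 0 <= rsum l f.
Proof. induction l; simpl; intros H. lra. pose proof (H a (or_introl eq_refl)). pose proof (IHl (fun b Hb => H b (or_intror Hb))). lra. Qed.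

Lemma csum_prod {A B} (s : list A) (t : list B) f g :
  csum (list_prod s t) (fun p => f (fst p) * g (snd p))%C = (csum s f * csum t g)%C.
Proof.
  induction s; simpl. ring.
  rewrite csum_app, IHs, csum_map. simpl. rewrite csum_scal. ring.
Qed.

Fixpoint zrange (K : nat) : list Z :=
  match K with
  | O => [0%Z]
  | S k => zrange k ++ [Z.of_nat (S k); (- Z.of_nat (S k))%Z]
  end.

Lemma zpsum_csum f K : zpsum f K = csum (zrange K) f.
Proof. induction K; simpl. ring. rewrite csum_app, <- IHK. simpl. ring. Qed.

Lemma in_zrange K n : In n (zrange K) <-> (Z.abs n <= Z.of_nat K)%Z.
Proof.
  induction K; simpl.
  - split. intros [H|[]]; subst; simpl; lia. intros; left; lia.
  - rewrite in_app_iff, IHK. simpl. split.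
    + intros [H|[H|[H|[]]]]; lia.
    + intros H. destruct (Z.le_gt_cases (Z.abs n) (Z.of_nat K)). left; auto. right. lia.
Qed.

Lemma NoDup_zrange K : NoDup (zrange K).
Proof.
  induction K; simpl. constructor. auto. constructor.
  apply NoDup_app; auto.
  - constructor. intros [H|[]]; lia. constructor; auto. constructor.
  - intros n H1 H2. apply in_zrange in H1. simpl in H2. destruct H2 as [H|[H|[]]]; lia.
Qed.

Lemma length_zrange K : length (zrange K) = (2 * K + 1)%nat.
Proof. induction K; simpl; auto. rewrite length_app, IHK. simpl. lia. Qed.

Definition box K := list_prod (zrange K) (zrange K).

Lemma in_box K p : In p (box K) <-> (Z.abs (fst p) <= Z.of_nat K /\ Z.abs (snd p) <= Z.of_nat K)%Z.
Proof. destruct p. unfold box. rewrite in_prod_iff, !in_zrange. simpl. tauto. Qed.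

Lemma NoDup_map_inj {A B} (f : A -> B) l : (forall x y, f x = f y -> x = y) -> NoDup l -> NoDup (map f l).
Proof. intros Hf Hl. apply NoDup_map_NoDup_ForallPairs; auto. intros x y _ _; apply Hf. Qed.

Lemma NoDup_list_prod' {A B} (s : list A) (t : list B) : NoDup s -> NoDup t -> NoDup (list_prod s t).
Proof.
  intros Hs Ht. induction Hs as [|a s Ha Hs IH]; simpl. constructor.
  apply NoDup_app; auto.
  - apply NoDup_map_inj; auto. intros x y H; inversion H; auto.
  - intros p H1 H2. apply in_map_iff in H1. destruct H1 as [y [<- _]].
    apply in_prod_iff in H2. tauto.
Qed.

Lemma NoDup_box K : NoDup (box K).
Proof. apply NoDup_list_prod'; apply NoDup_zrange. Qed.

Lemma length_box K : length (box K) = ((2*K+1)*(2*K+1))%nat.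
Proof. unfold box. rewrite length_prod, length_zrange. auto. Qed.

Lemma zsumL_support {A} (eqd : forall x y : A, {x = y} + {x <> y}) (l1 l2 : list A) F :
  NoDup l1 -> NoDup l2 -> (forall q, F q <> 0%Z -> (In q l1 <-> In q l2)) ->
  zsumL l1 F = zsumL l2 F.
Proof.
  revert l2. induction l1 as [|a l1 IH]; intros l2 H1 H2 H.
  - simpl. symmetry. apply zsumL_0. intros q Hq.
    destruct (Z.eq_dec (F q) 0); auto. apply H in n. apply n in Hq. destruct Hq.
  - inversion H1 as [|? ? Ha H1']; subst. simpl.
    destruct (Z.eq_dec (F a) 0) as [E|E].
    + rewrite E, IH with (l2 := l2); auto. intros q Hq. rewrite <- H by auto. simpl.
      split; auto. intros [<-|?]; auto. contradiction.
    + assert (Hin : In a l2) by (apply H; auto; left; auto).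
      destruct (in_split _ _ Hin) as [l2a [l2b ->]].
      rewrite zsumL_app. simpl. rewrite IH with (l2 := l2a ++ l2b).
      * rewrite zsumL_app. ring.
      * auto.
      * eapply NoDup_remove_1; eauto.
      * intros q Hq. destruct (eqd q a) as [->|Hqa].
        -- pose proof (NoDup_remove_2 _ _ _ H2). tauto.
        -- specialize (H q Hq). simpl in H. rewrite in_app_iff in *. simpl in H.
           split; intros.
           ++ assert (HH : a = q \/ In q l1) by auto. apply H in HH.
              destruct HH as [?|[?|?]]; auto; congruence.
           ++ assert (HH : In q l2a \/ a = q \/ In q l2b) by tauto. apply H in HH.
              destruct HH; auto; congruence.
Qed.

Lemma zsumL_reindex {A B} (eqd : forall x y : B, {x = y} + {x <> y}) (phi : A -> B) (s : list A) (t : list B) F :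
  (forall x y, phi x = phi y -> x = y) -> NoDup s -> NoDup t ->
  (forall p, In p s -> F (phi p) <> 0%Z -> In (phi p) t) ->
  (forall q, In q t -> F q <> 0%Z -> exists p, In p s /\ phi p = q) ->
  zsumL s (fun p => F (phi p)) = zsumL t F.
Proof.
  intros Hinj Hs Ht Ha Hb. rewrite <- zsumL_map. apply zsumL_support; auto.
  - apply NoDup_map_inj; auto.
  - intros q Hq. rewrite in_map_iff. split.
    + intros [p [<- Hp]]. auto.
    + intros Hqt. destruct (Hb q Hqt Hq) as [p [Hp <-]]. eauto.
Qed.

Definition pdec (x y : Z * Z) : {x = y} + {x <> y}.
Proof. decide equality; apply Z.eq_dec. Defined.

Lemma pow_le1 (c : R) n : 0 <= c <= 1 -> c ^ n <= 1.
Proof. intros H. induction n; simpl. lra. pose proof (pow_le c n). nra. Qed.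

Lemma pow_decr (c : R) m n : 0 <= c <= 1 -> (m <= n)%nat -> c ^ n <= c ^ m.
Proof.
  intros H Hmn. replace n with (m + (n - m))%nat by lia. rewrite pow_add.
  pose proof (pow_le1 c (n - m) H). pose proof (pow_le c m). nra.
Qed.

Definition Val (x : C) (L : list (Z * nat)) : C :=
  csum L (fun p => (RtoC (IZR (fst p)) * x ^ snd p)%C).
Definition Coef (L : list (Z * nat)) (N : nat) : Z :=
  zsumL L (fun p => if Nat.eqb (snd p) N then fst p else 0%Z).
Definition Wt (L : list (Z * nat)) : R := rsum L (fun p => IZR (Z.abs (fst p))).
Definition Vhigh (x : C) M (L : list (Z * nat)) : C :=
  csum L (fun p => if Nat.leb M (snd p) then (RtoC (IZR (fst p)) * x ^ snd p)%C else RtoC 0).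

Lemma csum_zero {A} (l : list A) f : (forall a, In a l -> f a = RtoC 0) -> csum l f = RtoC 0.
Proof. induction l; simpl; intros H. auto. rewrite H, IHl; auto. ring. Qed.

Lemma csum_delta x (w : Z) e M :
  csum (seq 0 M) (fun N => (RtoC (IZR (if Nat.eqb e N then w else 0%Z)) * x ^ N)%C)
  = if Nat.ltb e M then (RtoC (IZR w) * x ^ e)%C else RtoC 0.
Proof.
  induction M. simpl. destruct e; reflexivity.
  rewrite seq_S, csum_app, IHM. simpl.
  destruct (Nat.eqb e M) eqn:E.
  - apply Nat.eqb_eq in E. subst. rewrite Nat.ltb_irrefl.
    replace (Nat.ltb M (S M)) with true by (symmetry; apply Nat.ltb_lt; lia). ring.
  - apply Nat.eqb_neq in E. 
    destruct (Nat.ltb e M) eqn:E1; destruct (Nat.ltb e (S M)) eqn:E2;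
      try (rewrite Nat.ltb_lt in E1); try (rewrite Nat.ltb_lt in E2);
      try (rewrite Nat.ltb_ge in E1); try (rewrite Nat.ltb_ge in E2); try lia; ring.
Qed.

Lemma Val_split x M L :
  Val x L = (csum (seq 0 M) (fun N => RtoC (IZR (Coef L N)) * x ^ N) + Vhigh x M L)%C.
Proof.
  induction L as [|[w e] L IH]; unfold Val, Coef, Vhigh in *; simpl.
  - rewrite csum_zero. ring. intros; ring.
  - rewrite IH.
    rewrite (csum_ext (seq 0 M) (fun N => RtoC (IZR ((if Nat.eqb e N then w else 0%Z) + zsumL L (fun p => if Nat.eqb (snd p) N then fst p else 0%Z))) * x ^ N)%C
      (fun N => (RtoC (IZR (if Nat.eqb e N then w else 0%Z)) * x ^ N)
       + (RtoC (IZR (zsumL L (fun p => if Nat.eqb (snd p) N then fst p else 0%Z))) * x ^ N))%C).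
    2:{ intros N _. rewrite plus_IZR, RtoC_plus. ring. }
    rewrite csum_plus, csum_delta.
    destruct (Nat.ltb e M) eqn:E1; destruct (Nat.leb M e) eqn:E2;
      try (rewrite Nat.ltb_lt in E1); try (rewrite Nat.leb_le in E2);
      try (rewrite Nat.ltb_ge in E1); try (rewrite Nat.leb_gt in E2); try lia; ring.
Qed.

Lemma Vhigh_bound x M L : Cmod x <= 1 -> Cmod (Vhigh x M L) <= Wt L * Cmod x ^ M.
Proof.
  intros Hx. unfold Vhigh, Wt. eapply Rle_trans. apply Cmod_csum.
  rewrite Rmult_comm, <- rsum_scal. apply rsum_le. intros [w e] _. simpl.
  pose proof (Cmod_ge_0 x).
  destruct (Nat.leb M e) eqn:E.
  - apply Nat.leb_le in E. rewrite Cmod_mult, Cmod_pow, Cmod_R, abs_IZR.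
    pose proof (pow_decr (Cmod x) M e (conj H Hx) E). pose proof (Rabs_pos (IZR w)).
    nra.
  - rewrite Cmod_0. rewrite abs_IZR. pose proof (pow_le (Cmod x) M H). pose proof (Rabs_pos (IZR w)). nra.
Qed.

Lemma Wt_nonneg L : 0 <= Wt L.
Proof. apply rsum_nonneg. intros. apply IZR_le. lia. Qed.

Lemma Val_close x M L1 L2 : Cmod x <= 1 ->
  (forall N, (N < M)%nat -> Coef L1 N = Coef L2 N) ->
  Cmod (Val x L1 - Val x L2) <= (Wt L1 + Wt L2) * Cmod x ^ M.
Proof.
  intros Hx H. rewrite (Val_split x M L1), (Val_split x M L2).
  rewrite (csum_ext (seq 0 M) (fun N => RtoC (IZR (Coef L1 N)) * x ^ N)%C
                    (fun N => RtoC (IZR (Coef L2 N)) * x ^ N)%C).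
  2:{ intros N HN. apply in_seq in HN. rewrite H by lia. reflexivity. }
  replace (csum (seq 0 M) (fun N : nat => (RtoC (IZR (Coef L2 N)) * x ^ N)%C) + Vhigh x M L1 -
    (csum (seq 0 M) (fun N : nat => (RtoC (IZR (Coef L2 N)) * x ^ N)%C) + Vhigh x M L2))%C
   with (Vhigh x M L1 + - Vhigh x M L2)%C by ring.
  eapply Rle_trans. apply Cmod_triangle. rewrite Cmod_opp.
  pose proof (Vhigh_bound x M L1 Hx). pose proof (Vhigh_bound x M L2 Hx). lra.
Qed.

Definition is_lim_C (u : nat -> C) (l : C) :=
  is_lim_seq (fun n => Re (u n)) (Re l) /\ is_lim_seq (fun n => Im (u n)) (Im l).

Lemma is_lim_C_ext u v l : (forall n, u n = v n) -> is_lim_C u l -> is_lim_C v l.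
Proof.
  intros H [H1 H2]. split; eapply is_lim_seq_ext; try eassumption; intros n; simpl; rewrite H; auto.
Qed.

Lemma is_lim_C_const c : is_lim_C (fun _ => c) c.
Proof. split; apply is_lim_seq_const. Qed.

Lemma is_lim_C_plus u v a b : is_lim_C u a -> is_lim_C v b -> is_lim_C (fun n => u n + v n)%C (a + b)%C.
Proof.
  intros [H1 H2] [H3 H4]. split; simpl.
  apply (is_lim_seq_plus' _ _ _ _ H1 H3). apply (is_lim_seq_plus' _ _ _ _ H2 H4).
Qed.

Lemma is_lim_C_opp u a : is_lim_C u a -> is_lim_C (fun n => - u n)%C (- a)%C.
Proof.
  intros [H1 H2]. split; simpl.
  exact (proj1 (is_lim_seq_opp _ _) H1). exact (proj1 (is_lim_seq_opp _ _) H2).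
Qed.

Lemma is_lim_C_minus u v a b : is_lim_C u a -> is_lim_C v b -> is_lim_C (fun n => u n - v n)%C (a - b)%C.
Proof. intros H1 H2. apply is_lim_C_plus; auto. apply is_lim_C_opp; auto. Qed.

Lemma is_lim_C_mult u v a b : is_lim_C u a -> is_lim_C v b -> is_lim_C (fun n => u n * v n)%C (a * b)%C.
Proof.
  intros [H1 H2] [H3 H4]. split; simpl.
  - apply (is_lim_seq_minus' _ _ _ _ (is_lim_seq_mult' _ _ _ _ H1 H3) (is_lim_seq_mult' _ _ _ _ H2 H4)).
  - apply (is_lim_seq_plus' _ _ _ _ (is_lim_seq_mult' _ _ _ _ H1 H4) (is_lim_seq_mult' _ _ _ _ H2 H3)).
Qed.

Lemma is_lim_C_unique u a b : is_lim_C u a -> is_lim_C u b -> a = b.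
Proof.
  intros [H1 H2] [H3 H4].
  apply is_lim_seq_unique in H1, H2, H3, H4.
  apply Ceq; [rewrite H1 in H3 | rewrite H2 in H4]; injection H3 || injection H4; auto.
Qed.

Lemma is_lim_C_Clim u l : is_lim_C u l -> Clim u = l.
Proof.
  intros [H1 H2]. unfold Clim. apply is_lim_seq_unique in H1, H2. rewrite H1, H2. simpl.
  destruct l; auto.
Qed.

Lemma is_lim_C_close u v l e : is_lim_C u l -> (forall n, Cmod (v n - u n) <= e n) ->
  is_lim_seq e 0 -> is_lim_C v l.
Proof.
  intros Hu Hb He.
  assert (Hd : is_lim_C (fun n => v n - u n)%C (RtoC 0)).
  { split; simpl; apply is_lim_seq_abs_0;
    apply (is_lim_seq_le_le (fun _ => 0) _ e); auto; try apply is_lim_seq_const; intros n; split; try apply Rabs_pos.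
    - eapply Rle_trans; [exact (re_le_Cmod (v n - u n)%C) | apply Hb].
    - eapply Rle_trans; [exact (im_le_Cmod (v n - u n)%C) | apply Hb]. }
  replace l with (RtoC 0 + l)%C by ring.
  eapply is_lim_C_ext. 2: apply (is_lim_C_plus _ _ _ _ Hd Hu). intros n; simpl. ring.
Qed.

Lemma cauchy_C u c rho : 0 <= rho < 1 -> 0 <= c ->
  (forall n m, (n <= m)%nat -> Cmod (u m - u n) <= c * rho ^ n) -> exists l, is_lim_C u l.
Proof.
  intros Hr Hc H.
  assert (Hcau : forall (g : C -> R), (forall z, Rabs (g z) <= Cmod z) ->
            (forall a b, g (a - b)%C = g a - g b) -> ex_lim_seq_cauchy (fun n => g (u n))).
  { intros g Hg1 Hg2 eps.
    destruct (pow_lt_1_zero rho ltac:(rewrite Rabs_pos_eq; lra) (eps / (c + 1))) as [N HN].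
    { apply Rdiv_lt_0_compat. apply cond_pos. lra. }
    exists N. intros n m Hn Hm.
    assert (key : forall n m, (N <= n)%nat -> (n <= m)%nat -> Rabs (g (u m) - g (u n)) < eps).
    { intros n0 m0 H0 H1. rewrite <- Hg2. eapply Rle_lt_trans. apply Hg1.
      eapply Rle_lt_trans. apply H; auto.
      specialize (HN n0 H0). rewrite Rabs_pos_eq in HN by (apply pow_le; lra).
      pose proof (cond_pos eps).
      apply Rlt_div_r in HN; [|lra].
      pose proof (pow_le rho n0 (proj1 Hr)). nra. }
    destruct (Nat.le_ge_cases n m).
    - rewrite Rabs_minus_sym. auto.
    - auto. }
  destruct (proj2 (ex_lim_seq_cauchy_corr _) (Hcau Re re_le_Cmod (fun a b => eq_refl))) as [l1 H1].
  destruct (proj2 (ex_lim_seq_cauchy_corr _) (Hcau Im im_le_Cmod (fun a b => eq_refl))) as [l2 H2].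
  exists (l1, l2). split; auto.
Qed.

Lemma zpsum_cauchy f rho : 0 <= rho < 1 -> (forall n, Cmod (f n) <= rho ^ (Z.abs_nat n)) ->
  forall n d, (1 - rho) * Cmod (zpsum f (n + d) - zpsum f n) <= 2 * rho ^ (S n) * (1 - rho ^ d).
Proof.
  intros Hr Hf n d. induction d.
  - rewrite Nat.add_0_r. replace (zpsum f n - zpsum f n)%C with (RtoC 0) by ring.
    rewrite Cmod_0. simpl. lra.
  - replace (n + S d)%nat with (S (n + d)) by lia. simpl zpsum.
    set (A := (zpsum f (n + d) - zpsum f n)%C).
    replace (zpsum f (n + d) + f (Z.pos (Pos.of_succ_nat (n + d))) + f (Z.neg (Pos.of_succ_nat (n + d))) - zpsum f n)%C
      with (A + f (Z.pos (Pos.of_succ_nat (n + d))) + f (Z.neg (Pos.of_succ_nat (n + d))))%C by (unfold A; ring).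
    pose proof (Hf (Z.pos (Pos.of_succ_nat (n + d)))) as H1.
    pose proof (Hf (Z.neg (Pos.of_succ_nat (n + d)))) as H2.
    simpl Z.abs_nat in H1, H2. rewrite SuccNat2Pos.id_succ in H1, H2.
    assert (Htri : Cmod (A + f (Z.pos (Pos.of_succ_nat (n + d))) + f (Z.neg (Pos.of_succ_nat (n + d))))
       <= Cmod A + Cmod (f (Z.pos (Pos.of_succ_nat (n + d)))) + Cmod (f (Z.neg (Pos.of_succ_nat (n + d))))).
    { eapply Rle_trans. apply Cmod_triangle. pose proof (Cmod_triangle A (f (Z.pos (Pos.of_succ_nat (n + d))))). lra. }
    replace (rho ^ S (n + d)) with (rho ^ S n * rho ^ d) in H1, H2 by (rewrite <- pow_add; f_equal; lia).
    simpl pow. simpl pow in H1, H2, IHd.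
    pose proof (pow_le rho n (proj1 Hr)). pose proof (pow_le rho d (proj1 Hr)).
    assert (0 <= 1 - rho) by lra.
    fold A in IHd.
    eapply Rle_trans. apply Rmult_le_compat_l. lra. exact Htri.
    set (c1 := Cmod (f (Z.pos (Pos.of_succ_nat (n + d))))) in *.
    set (c2 := Cmod (f (Z.neg (Pos.of_succ_nat (n + d))))) in *.
    set (a := Cmod A) in *.
    assert ((1 - rho) * (c1 + c2) <= (1 - rho) * (2 * (rho * rho ^ n * rho ^ d))) by (apply Rmult_le_compat_l; lra).
    nra.
Qed.

Lemma zsum_lim f rho : 0 <= rho < 1 -> (forall n, Cmod (f n) <= rho ^ (Z.abs_nat n)) ->
  is_lim_C (zpsum f) (zsum f).
Proof.
  intros Hr Hf.
  destruct (cauchy_C (zpsum f) (2 / (1 - rho)) rho Hr) as [l Hl].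
  - apply Rle_div_r; lra.
  - intros n m Hnm. replace m with (n + (m - n))%nat by lia.
    pose proof (zpsum_cauchy f rho Hr Hf n (m - n)).
    pose proof (pow_le rho (m - n) (proj1 Hr)). pose proof (pow_le rho n (proj1 Hr)).
    pose proof (pow_le1 rho (m - n) ltac:(lra)).
    apply Rmult_le_reg_l with (1 - rho). lra.
    replace ((1 - rho) * (2 / (1 - rho) * rho ^ n)) with (2 * rho ^ n) by (field; lra).
    simpl pow in H. eapply Rle_trans; [exact H|].
    assert (rho * (1 - rho ^ (m - n)) <= 1) by nra. nra.
  - unfold zsum. rewrite (is_lim_C_Clim _ _ Hl). auto.
Qed.

Lemma lin_geom_bound s n : 0 <= s < 1 -> (1 - s) * (INR n + 1) * s ^ n <= 1 - s ^ (S n).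
Proof.
  intros Hs. induction n.
  - simpl. lra.
  - rewrite S_INR. simpl pow in *. pose proof (pow_le s n (proj1 Hs)).
    set (t := s ^ n) in *.
    assert (Ht : 0 <= t) by (unfold t; apply pow_le; lra).
    assert (Ht1 : t <= 1) by (unfold t; apply pow_le1; lra).
    assert (s * t <= t) by (rewrite <- (Rmult_1_l t) at 2; apply Rmult_le_compat_r; lra).
    assert (s * ((1 - s) * (INR n + 1) * t) <= s * (1 - s * t)) by (apply Rmult_le_compat_l; lra).
    assert (0 <= (1 - s) * (1 - s * t)) by (apply Rmult_le_pos; lra).
    nra.
Qed.

Lemma quad_geom_lim rho : 0 <= rho < 1 -> is_lim_seq (fun n => (INR n + 1) ^ 2 * rho ^ n) 0.
Proof.
  intros Hr.
  set (s := sqrt (sqrt rho)).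
  assert (Hs0 : 0 <= s) by apply sqrt_pos.
  assert (Hs4 : s * s * (s * s) = rho).
  { unfold s. rewrite sqrt_sqrt by apply sqrt_pos. apply sqrt_sqrt. lra. }
  assert (Hs1 : s < 1).
  { destruct (Rlt_le_dec s 1); auto. assert (1*1 <= s * s) by (apply Rmult_le_compat; lra).
    assert (1*1 <= (s * s) * (s * s)) by (apply Rmult_le_compat; lra). lra. }
  apply (is_lim_seq_le_le (fun _ => 0) _ (fun n => (/ (1 - s)) ^ 2 * (s * s) ^ n)).
  - intros n. split. pose proof (pow_le rho n (proj1 Hr)). pose proof (pos_INR n). nra.
    pose proof (lin_geom_bound s n (conj Hs0 Hs1)) as H.
    pose proof (pow_le s (S n) Hs0).
    assert (H2 : (INR n + 1) * s ^ n <= / (1 - s)).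
    { apply Rmult_le_reg_l with (1 - s). lra. rewrite Rinv_r by lra. nra. }
    assert (Hp : rho ^ n = (s ^ n) ^ 2 * (s * s) ^ n).
    { rewrite <- Hs4. rewrite !Rpow_mult_distr. ring. }
    rewrite Hp. pose proof (pow_le s n Hs0). pose proof (pow_le (s*s) n ltac:(nra)). pose proof (pos_INR n).
    assert (0 <= (INR n + 1) * s ^ n) by nra.
    assert (((INR n + 1) * s ^ n) ^ 2 <= (/ (1 - s)) ^ 2) by (apply pow_incr; lra).
    replace ((INR n + 1) ^ 2 * ((s ^ n) ^ 2 * (s * s) ^ n)) with (((INR n + 1) * s ^ n) ^ 2 * (s * s) ^ n) by ring.
    apply Rmult_le_compat_r; auto.
  - apply is_lim_seq_const.
  - replace (Finite 0) with (Rbar_mult ((/ (1 - s)) ^ 2) 0) by (simpl; f_equal; ring).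
    apply is_lim_seq_scal_l. apply is_lim_seq_geom. rewrite Rabs_pos_eq; nra.
Qed.

(* ---------- Shanks' finite form of Euler's pentagonal theorem ---------- *)
Fixpoint pp (q : C) (k m : nat) : C :=
  match m with
  | O => RtoC 1
  | S m' => (pp q k m' * (RtoC 1 - q ^ (k + S m')))%C
  end.

Fixpoint av (q : C) (k : nat) : C :=
  match k with
  | O => RtoC 1
  | S k' => (- q ^ (S k') * av q k')%C
  end.

Definition tt (q : C) (n k : nat) : C := (av q k * pp q k (n - k) * q ^ (n * k))%C.

Definition FF (q : C) (n : nat) : C := csum (seq 0 (S n)) (tt q n).

Fixpoint pent (q : C) (n : nat) : C :=
  match n with
  | O => RtoC 1
  | S n' => (pent q n' + (av q n - av q n') * q ^ (n * n))%C
  end.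

Lemma pp_first q k j : pp q k (S j) = ((RtoC 1 - q ^ (S k)) * pp q (S k) j)%C.
Proof.
  revert k. induction j; intros k.
  - change (RtoC 1 * (RtoC 1 - q ^ (k + 1)) = (RtoC 1 - q ^ S k) * RtoC 1)%C.
    replace (k + 1)%nat with (S k) by lia. ring.
  - change (pp q k (S (S j))) with (pp q k (S j) * (RtoC 1 - q ^ (k + S (S j))))%C. rewrite IHj.
    change (pp q (S k) (S j)) with (pp q (S k) j * (RtoC 1 - q ^ (S k + S j)))%C.
    replace (S k + S j)%nat with (k + S (S j))%nat by lia. ring.
Qed.

Lemma telescope q N m : (m <= N)%nat ->
  csum (seq 0 (S m)) (fun k => tt q (S N) k - tt q N k)%C
  = (- av q m * q ^ ((S N) * (S m)) * pp q m (N - m))%C.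
Proof.
  induction m; intros Hm.
  - unfold tt. simpl. rewrite Nat.sub_0_r, !Nat.mul_0_r. simpl.
    rewrite Nat.mul_1_r. ring.
  - rewrite (seq_S (S m)), csum_app, IHm by lia.
    change (0 + S m)%nat with (S m).
    unfold csum. cbn [fold_right].
    unfold tt.
    replace (S N - S m)%nat with (S (N - S m)) by lia.
    replace (N - m)%nat with (S (N - S m)) by lia.
    rewrite (pp_first q m (N - S m)).
    change (pp q (S m) (S (N - S m))) with (pp q (S m) (N - S m) * (RtoC 1 - q ^ (S m + S (N - S m))))%C.
    replace (S m + S (N - S m))%nat with (S N) by lia.
    change (av q (S m)) with (- q ^ S m * av q m)%C.
    replace (S N * S m)%nat with (N * S m + S m)%nat by lia.
    replace (S N * S (S m))%nat with (N * S m + S m + S N)%nat by lia.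
    rewrite !Cpow_add_r.
    set (a := (q ^ S m)%C). set (b := (q ^ S N)%C). set (d := (q ^ (N * S m))%C).
    set (P := pp q (S m) (N - S m)). set (A := av q m).
    ring.
Qed.

Lemma shanks q n : FF q n = pent q n.
Proof.
  induction n.
  - unfold FF, tt. simpl. ring.
  - change (pent q (S n)) with (pent q n + (av q (S n) - av q n) * q ^ (S n * S n))%C.
    rewrite <- IHn. unfold FF.
    rewrite (seq_S (S n)), csum_app. change (0 + S n)%nat with (S n).
    replace (csum (seq 0 (S n)) (tt q (S n)))
      with (csum (seq 0 (S n)) (fun k => tt q (S n) k - tt q n k)%C + csum (seq 0 (S n)) (tt q n))%C
      by (rewrite <- csum_plus; apply csum_ext; intros; ring).
    rewrite telescope by lia.
    set (X := csum (seq 0 (S n)) (tt q n)).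
    unfold csum. cbn [fold_right]. unfold tt.
    rewrite !Nat.sub_diag. cbn [pp].
    set (Y := av q (S n)). set (Z := (q ^ (S n * S n))%C).
    ring.
Qed.

Lemma exp_ge_1plus t : 1 + t <= exp t.
Proof.
  destruct (Req_dec t 0) as [->|H]. rewrite exp_0; lra. left; apply exp_ineq1; auto.
Qed.

Lemma pp_bound q k m : Cmod q < 1 ->
  Cmod (pp q k m) <= exp (Cmod q * (1 - Cmod q ^ m) / (1 - Cmod q)).
Proof.
  intros Hq. set (r := Cmod q) in *. assert (Hr0 : 0 <= r) by apply Cmod_ge_0.
  induction m.
  - simpl. rewrite Cmod_1. replace (r * (1 - 1) / (1 - r)) with 0 by (field; lra). rewrite exp_0; lra.
  - simpl pp. rewrite Cmod_mult.
    assert (H1 : Cmod (RtoC 1 - q ^ (k + S m)) <= 1 + r ^ (S m)).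
    { unfold Cminus. eapply Rle_trans. apply Cmod_triangle. rewrite Cmod_opp, Cmod_pow, Cmod_1.
      fold r. pose proof (pow_decr r (S m) (k + S m) ltac:(lra) ltac:(lia)). lra. }
    eapply Rle_trans. apply Rmult_le_compat; try apply Cmod_ge_0. exact IHm. exact H1.
    eapply Rle_trans. apply Rmult_le_compat_l. left; apply exp_pos. apply exp_ge_1plus.
    rewrite <- exp_plus. right. f_equal. simpl. field. lra.
Qed.

Lemma exp_mono x y : x <= y -> exp x <= exp y.
Proof. intros [H|H]. left; apply exp_increasing; auto. subst; lra. Qed.

Lemma pp_bound' q k m : Cmod q < 1 -> Cmod (pp q k m) <= exp (1 / (1 - Cmod q)).
Proof.
  intros Hq. eapply Rle_trans. apply pp_bound; auto. apply exp_mono.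
  pose proof (Cmod_ge_0 q). pose proof (pow_le (Cmod q) m H). pose proof (pow_le1 (Cmod q) m ltac:(lra)).
  unfold Rdiv. apply Rmult_le_compat_r. left; apply Rinv_0_lt_compat; lra. nra.
Qed.

Lemma av_bound q k : Cmod q <= 1 -> Cmod (av q k) <= 1.
Proof.
  intros Hq. induction k. simpl av. rewrite Cmod_1; lra.
  change (av q (S k)) with (- q ^ S k * av q k)%C.
  rewrite Cmod_mult, Cmod_opp, Cmod_pow. pose proof (pow_le1 (Cmod q) (S k) (conj (Cmod_ge_0 q) Hq)).
  pose proof (pow_le (Cmod q) (S k) (Cmod_ge_0 q)). pose proof (Cmod_ge_0 (av q k)). nra.
Qed.

Lemma T_bound q n : Cmod q < 1 ->
  Cmod (FF q n - pp q 0 n) <= INR n * exp (1 / (1 - Cmod q)) * Cmod q ^ n.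
Proof.
  intros Hq. pose proof (Cmod_ge_0 q) as H0.
  unfold FF. rewrite <- cons_seq. cbn [csum fold_right]. fold (csum (seq 1 n) (tt q n)).
  unfold tt at 1. rewrite Nat.sub_0_r, Nat.mul_0_r. cbn [av Cpow].
  replace (RtoC 1 * pp q 0 n * RtoC 1 + csum (seq 1 n) (tt q n) - pp q 0 n)%C with (csum (seq 1 n) (tt q n)) by ring.
  eapply Rle_trans. apply Cmod_csum.
  eapply Rle_trans. apply (rsum_le _ _ (fun _ => exp (1 / (1 - Cmod q)) * Cmod q ^ n)).
  - intros k Hk. apply in_seq in Hk. unfold tt. rewrite !Cmod_mult, Cmod_pow.
    pose proof (av_bound q k ltac:(lra)). pose proof (pp_bound' q k (n - k) Hq).
    pose proof (pow_decr (Cmod q) n (n * k) ltac:(lra) ltac:(nia)).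
    pose proof (Cmod_ge_0 (av q k)). pose proof (Cmod_ge_0 (pp q k (n - k))).
    pose proof (pow_le (Cmod q) (n * k) H0).
    apply Rmult_le_compat; try nra. 
  - rewrite rsum_const, length_seq. lra.
Qed.

Definition xx (tau : C) : C := cexp (RtoC (2 * PI / 24) * Ci * tau)%C.

Lemma qpow_xx tau c s N : 2 * PI * s * c = INR N * (2 * PI / 24) ->
  qpow (RtoC c * tau)%C s = (xx tau ^ N)%C.
Proof.
  intros H. unfold qpow, xx. rewrite <- cexp_nat. f_equal.
  replace (RtoC (2 * PI * s) * Ci * (RtoC c * tau))%C with (RtoC (2 * PI * s) * RtoC c * Ci * tau)%C by ring.
  rewrite <- RtoC_mult, H, RtoC_mult. ring.
Qed.

Lemma qpow_xx1 tau s N : 2 * PI * s = INR N * (2 * PI / 24) -> qpow tau s = (xx tau ^ N)%C.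
Proof.
  intros H. replace (qpow tau s) with (qpow (RtoC 1 * tau)%C s) by (f_equal; ring).
  apply qpow_xx. rewrite <- H. ring.
Qed.

Definition rho (tau : C) : R := exp (- (2 * PI / 24) * Im tau).

Lemma Cmod_xx tau : Cmod (xx tau) = rho tau.
Proof. unfold xx, rho. rewrite Cmod_cexp. f_equal. unfold Re, Im; simpl. ring. Qed.

Lemma rho_bounds tau : 0 < Im tau -> 0 < rho tau < 1.
Proof.
  intros H. unfold rho. split. apply exp_pos.
  rewrite <- exp_0. apply exp_increasing. pose proof PI_RGT_0. nra.
Qed.

Lemma INR_Z2N z : (0 <= z)%Z -> INR (Z.to_nat z) = IZR z.
Proof. intros H. rewrite INR_IZR_INZ, Z2Nat.id; auto. Qed.

Definition zsgn (n : Z) : Z := if Z.eqb (n mod 2) 0 then 1%Z else (-1)%Z.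

Lemma zsgn_S n : zsgn (n + 1) = (- zsgn n)%Z.
Proof. unfold zsgn. destruct (Z.eqb_spec (n mod 2) 0); destruct (Z.eqb_spec ((n+1) mod 2) 0); Z.div_mod_to_equations; lia. Qed.
Lemma zsgn_opp n : zsgn (- n) = zsgn n.
Proof. unfold zsgn. destruct (Z.eqb_spec (n mod 2) 0); destruct (Z.eqb_spec ((-n) mod 2) 0); Z.div_mod_to_equations; lia. Qed.
Lemma zsgn_abs1 n : Rabs (IZR (zsgn n)) <= 1.
Proof. unfold zsgn. destruct (Z.eqb (n mod 2) 0); rewrite <- abs_IZR; simpl; lra. Qed.

Lemma pow_m1_zsgn n : (-1) ^ (Z.abs_nat n) = IZR (zsgn n).
Proof.
  assert (H : forall m, (-1) ^ m = IZR (zsgn (Z.of_nat m))).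
  { induction m. reflexivity. rewrite Nat2Z.inj_succ, <- Z.add_1_r, zsgn_S, opp_IZR, <- IHm. simpl. ring. }
  rewrite H. destruct (Z.le_ge_cases 0 n).
  - rewrite Zabs2Nat.id_abs, Z.abs_eq; auto.
  - rewrite Zabs2Nat.id_abs, Z.abs_neq, zsgn_opp; auto.
Qed.

Lemma term_bound x (w : Z) (e : nat) (n : Z) : Cmod x <= 1 -> Rabs (IZR w) <= 1 -> (Z.abs_nat n <= e)%nat ->
  Cmod (RtoC (IZR w) * x ^ e)%C <= Cmod x ^ (Z.abs_nat n).
Proof.
  intros Hx Hw He. rewrite Cmod_mult, Cmod_R, Cmod_pow.
  pose proof (pow_decr (Cmod x) _ _ (conj (Cmod_ge_0 x) Hx) He). pose proof (pow_le (Cmod x) e (Cmod_ge_0 x)).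
  pose proof (Rabs_pos (IZR w)). nra.
Qed.

Definition eE (j : Z) : nat := Z.to_nat ((6 * j + 1) * (6 * j + 1)).
Definition gE (x : C) (j : Z) : C := (RtoC (IZR (zsgn j)) * x ^ eE j)%C.

Lemma av_x x j : av (x ^ 24)%C j = (RtoC (IZR (zsgn (Z.of_nat j))) * x ^ (12 * j * S j))%C.
Proof.
  induction j.
  - simpl. unfold zsgn. simpl. ring.
  - change (av (x ^ 24)%C (S j)) with (- (x ^ 24) ^ S j * av (x ^ 24)%C j)%C.
    rewrite IHj, <- Cpow_mult_r, Nat2Z.inj_succ, <- Z.add_1_r, zsgn_S, opp_IZR.
    replace (12 * S j * S (S j))%nat with (24 * S j + 12 * j * S j)%nat by lia.
    rewrite Cpow_add_r, RtoC_opp. ring.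
Qed.

Lemma pent_x x n : (x * pent (x ^ 24) n)%C = zpsum (gE x) n.
Proof.
  induction n.
  - simpl. unfold gE, eE, zsgn. simpl. ring.
  - change (pent (x ^ 24) (S n)) with (pent (x ^ 24) n + (av (x ^ 24) (S n) - av (x ^ 24) n) * (x ^ 24) ^ (S n * S n))%C.
    change (zpsum (gE x) (S n)) with (zpsum (gE x) n + gE x (Z.of_nat (S n)) + gE x (- Z.of_nat (S n))%Z)%C.
    rewrite <- IHn, !av_x, <- Cpow_mult_r. unfold gE, eE.
    rewrite zsgn_opp, Nat2Z.inj_succ, <- Z.add_1_r, zsgn_S, opp_IZR.
    replace (Z.to_nat ((6 * (Z.of_nat n + 1) + 1) * (6 * (Z.of_nat n + 1) + 1)))
      with (1 + (12 * S n * S (S n) + 24 * (S n * S n)))%nat by nia.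
    replace (Z.to_nat ((6 * - (Z.of_nat n + 1) + 1) * (6 * - (Z.of_nat n + 1) + 1)))
      with (1 + (12 * n * S n + 24 * (S n * S n)))%nat by nia.
    rewrite !Cpow_add_r. rewrite RtoC_opp. simpl (x ^ 1)%C. ring.
Qed.

Lemma eta_pprod_pp tau n : eta_pprod tau n = pp (xx tau ^ 24)%C 0 n.
Proof.
  induction n. reflexivity.
  change (eta_pprod tau (S n)) with (eta_pprod tau n * (RtoC 1 - qpow tau (INR (S n))))%C.
  change (pp (xx tau ^ 24)%C 0 (S n)) with (pp (xx tau ^ 24)%C 0 n * (RtoC 1 - (xx tau ^ 24) ^ (0 + S n)))%C.
  rewrite IHn, <- Cpow_mult_r. f_equal. f_equal. f_equal. apply qpow_xx1.
  rewrite Nat.add_0_l, mult_INR, (INR_IZR_INZ 24). simpl (Z.of_nat 24). field.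
Qed.

Lemma eta_lim tau : 0 < Im tau -> is_lim_C (zpsum (gE (xx tau))) (eta tau).
Proof.
  intros Ht. set (x := xx tau). pose proof (rho_bounds tau Ht) as Hr.
  assert (Hx : Cmod x = rho tau) by apply Cmod_xx.
  assert (Hg : is_lim_C (zpsum (gE x)) (zsum (gE x))).
  { apply (zsum_lim _ (rho tau)). lra. intros n. rewrite <- Hx. apply term_bound; try lra.
    apply zsgn_abs1. unfold eE. nia. }
  set (E := zsum (gE x)) in *.
  set (q := (x ^ 24)%C).
  assert (Hq : Cmod q = rho tau ^ 24) by (unfold q; rewrite Cmod_pow, Hx; auto).
  assert (Hq1 : Cmod q < 1).
  { rewrite Hq. pose proof (pow_le1 (rho tau) 23 ltac:(lra)). simpl. pose proof (pow_le (rho tau) 23). simpl in *. nra. }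
  set (B := exp (1 / (1 - Cmod q))).
  assert (H1 : is_lim_C (fun n => x * eta_pprod tau n)%C E).
  { apply (is_lim_C_close _ _ _ (fun n => B * ((INR n + 1) ^ 2 * rho tau ^ n)) Hg).
    - intros n. rewrite eta_pprod_pp. fold x q. rewrite <- pent_x, <- shanks. fold q.
      replace (x * pp q 0 n - x * FF q n)%C with (- x * (FF q n - pp q 0 n))%C by ring.
      rewrite Cmod_mult, Cmod_opp, Hx.
      pose proof (T_bound q n Hq1). fold B in H.
      rewrite Hq in H. pose proof (pow_decr (rho tau) n (24 * n) ltac:(lra) ltac:(lia)).
      rewrite <- pow_mult in H. pose proof (pos_INR n). pose proof (pow_le (rho tau) n ltac:(lra)).
      assert (0 < B) by apply exp_pos.
      pose proof (Cmod_ge_0 (FF q n - pp q 0 n)).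
      assert (Cmod (FF q n - pp q 0 n) <= INR n * B * rho tau ^ n).
      { eapply Rle_trans. exact H. rewrite Rmult_comm. rewrite (Rmult_comm (INR n * B)).
        apply Rmult_le_compat_r; nra. }
      assert (rho tau * Cmod (FF q n - pp q 0 n) <= 1 * (INR n * B * rho tau ^ n)) by (apply Rmult_le_compat; lra).
      nra.
    - replace 0 with (B * 0) by ring. 
      apply (is_lim_seq_scal_l _ B 0). apply quad_geom_lim. lra. }
  assert (Hxnz : x <> RtoC 0).
  { intros H0. rewrite H0, Cmod_0 in Hx. lra. }
  assert (H2 : is_lim_C (eta_pprod tau) (/ x * E)%C).
  { eapply is_lim_C_ext. 2: apply (is_lim_C_mult _ _ _ _ (is_lim_C_const (/ x)%C) H1).
    intros n. simpl. field. auto. }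
  unfold eta. rewrite (is_lim_C_Clim _ _ H2).
  rewrite (qpow_xx1 tau (1/24) 1). 2: { simpl; field. }
  fold x. replace (x ^ 1 * (/ x * E))%C with E. exact Hg. simpl. field. auto.
Qed.

Open Scope Z_scope.

Definition lvl (N : nat) (p : Z * Z) : bool :=
  Z.eqb (2 * (fst p * fst p + snd p * snd p)) (Z.of_nat N).
Definition Fw (T : Z -> Z -> Z) (N : nat) (p : Z * Z) : Z :=
  if lvl N p then T (fst p mod 6) (snd p mod 6) else 0.

Lemma lvl_box N K p : lvl N p = true -> (N < K)%nat -> In p (box K).
Proof.
  destruct p as [a b]. unfold lvl. cbn [fst snd]. intros H HK. apply Z.eqb_eq in H.
  apply in_box. cbn [fst snd]. assert (Z.of_nat N < Z.of_nat K) by lia.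
  assert (Z.abs a <= a * a) by (destruct (Z.abs_spec a) as [[? ->]|[? ->]]; destruct (Z.eq_dec a 0); nia).
  assert (Z.abs b <= b * b) by (destruct (Z.abs_spec b) as [[? ->]|[? ->]]; destruct (Z.eq_dec b 0); nia).
  assert (0 <= a * a) by nia. assert (0 <= b * b) by nia.
  split; lia.
Qed.

Lemma eqb_to_nat u v N : 0 <= u -> 0 <= v ->
  Nat.eqb (Z.to_nat u + Z.to_nat v) N = Z.eqb (u + v) (Z.of_nat N).
Proof.
  intros Hu Hv. destruct (Nat.eqb_spec (Z.to_nat u + Z.to_nat v) N); destruct (Z.eqb_spec (u + v) (Z.of_nat N)); auto; lia.
Qed.

Lemma reindex_box K (phi : Z * Z -> Z * Z) (F : Z * Z -> Z) :
  (forall p q, phi p = phi q -> p = q) ->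
  (forall p, In p (box K) -> F (phi p) <> 0 -> In (phi p) (box K)) ->
  (forall q, In q (box K) -> F q <> 0 -> exists p, In p (box K) /\ phi p = q) ->
  zsumL (box K) (fun p => F (phi p)) = zsumL (box K) F.
Proof. intros. apply zsumL_reindex; auto using pdec, NoDup_box. Qed.

Lemma invol_box K (sg : Z * Z -> Z * Z) F :
  (forall p, sg (sg p) = p) -> (forall p, In p (box K) -> In (sg p) (box K)) ->
  zsumL (box K) (fun p => F (sg p)) = zsumL (box K) F.
Proof.
  intros H1 H2. apply reindex_box.
  - intros p q E. rewrite <- (H1 p), <- (H1 q), E. auto.
  - intros; auto.
  - intros q Hq _. exists (sg q). auto.
Qed.

Lemma mod6_opp a : (- a) mod 6 = (- (a mod 6)) mod 6.
Proof. Z.div_mod_to_equations; lia. Qed.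

Lemma box_sw K p : In p (box K) -> In (snd p, fst p) (box K).
Proof. rewrite !in_box. cbn [fst snd]. tauto. Qed.
Lemma box_neg K p : In p (box K) -> In (- fst p, - snd p) (box K).
Proof. rewrite !in_box. cbn [fst snd]. rewrite !Z.abs_opp. tauto. Qed.
Lemma box_swneg K p : In p (box K) -> In (- snd p, - fst p) (box K).
Proof. rewrite !in_box. cbn [fst snd]. rewrite !Z.abs_opp. tauto. Qed.

Lemma sym_zero (T : Z -> Z -> Z) K N :
  (forall i j, 0 <= i < 6 -> 0 <= j < 6 ->
     T i j + T j i + T ((- i) mod 6) ((- j) mod 6) + T ((- j) mod 6) ((- i) mod 6) = 0) ->
  zsumL (box K) (Fw T N) = 0.
Proof.
  intros HT.
  set (s1 := fun p : Z * Z => (snd p, fst p)).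
  set (s2 := fun p : Z * Z => (- fst p, - snd p)).
  set (s3 := fun p : Z * Z => (- snd p, - fst p)).
  assert (E1 : zsumL (box K) (fun p => Fw T N (s1 p)) = zsumL (box K) (Fw T N)).
  { apply invol_box. intros [a b]; reflexivity. apply box_sw. }
  assert (E2 : zsumL (box K) (fun p => Fw T N (s2 p)) = zsumL (box K) (Fw T N)).
  { apply invol_box. intros [a b]; unfold s2; cbn [fst snd]; rewrite !Z.opp_involutive; reflexivity. apply box_neg. }
  assert (E3 : zsumL (box K) (fun p => Fw T N (s3 p)) = zsumL (box K) (Fw T N)).
  { apply invol_box. intros [a b]; unfold s3; cbn [fst snd]; rewrite !Z.opp_involutive; reflexivity. apply box_swneg. }
  assert (E : zsumL (box K) (fun p => Fw T N (s1 p)) + zsumL (box K) (Fw T N)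
       + zsumL (box K) (fun p => Fw T N (s2 p)) + zsumL (box K) (fun p => Fw T N (s3 p)) = 0).
  { rewrite <- !zsumL_plus. apply zsumL_0. intros [a b] _.
    unfold Fw, lvl, s1, s2, s3; cbn [fst snd].
    replace (2 * (b * b + a * a)) with (2 * (a * a + b * b)) by ring.
    replace (2 * (- a * - a + - b * - b)) with (2 * (a * a + b * b)) by ring.
    replace (2 * (- b * - b + - a * - a)) with (2 * (a * a + b * b)) by ring.
    destruct (Z.eqb (2 * (a * a + b * b)) (Z.of_nat N)); auto.
    rewrite (mod6_opp a), (mod6_opp b).
    pose proof (HT (a mod 6) (b mod 6) ltac:(apply Z.mod_pos_bound; lia) ltac:(apply Z.mod_pos_bound; lia)) as H.
    rewrite <- H. ring. }
  rewrite E1, E2, E3 in E. lia.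
Qed.
Ltac res6_one e :=
  first [ replace (e mod 6) with 0 by (Z.div_mod_to_equations; lia)
        | replace (e mod 6) with 1 by (Z.div_mod_to_equations; lia)
        | replace (e mod 6) with 2 by (Z.div_mod_to_equations; lia)
        | replace (e mod 6) with 3 by (Z.div_mod_to_equations; lia)
        | replace (e mod 6) with 4 by (Z.div_mod_to_equations; lia)
        | replace (e mod 6) with 5 by (Z.div_mod_to_equations; lia) ].
Ltac res6 := repeat (match goal with |- context [ (?e mod 6) ] => res6_one e end).

Ltac table6 :=
  let i := fresh in let j := fresh in let Hi := fresh in let Hj := fresh in
  intros i j Hi Hj;
  assert (i = 0 \/ i = 1 \/ i = 2 \/ i = 3 \/ i = 4 \/ i = 5) as Hi' by lia;
  assert (j = 0 \/ j = 1 \/ j = 2 \/ j = 3 \/ j = 4 \/ j = 5) as Hj' by lia;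
  destruct Hi' as [Ei|[Ei|[Ei|[Ei|[Ei|Ei]]]]]; destruct Hj' as [Ej|[Ej|[Ej|[Ej|[Ej|Ej]]]]]; rewrite Ei, Ej; reflexivity.

Definition TA (i j : Z) : Z := if (Z.eqb (i mod 2) 1) && (Z.eqb j 0) then 1 else 0.
Definition TC (i j : Z) : Z := if (Z.eqb (i mod 2) 0) && (Z.eqb j 3) then 1 else 0.
Definition TR (i j : Z) : Z :=
  if (Z.eqb (i mod 3) 1) && (Z.eqb (j mod 3) 0) && (Z.eqb ((i + j) mod 2) 1)
  then (if Z.eqb i 1 then 2 else -2) else 0.
Definition T2 (i j : Z) : Z :=
  if Z.eqb (i mod 3) 0 then ((if Z.eqb i 0 then 1 else -1) - (if Z.eqb (j mod 2) 0 then 1 else -1)) else 0.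

Lemma table1 : forall i j, 0 <= i < 6 -> 0 <= j < 6 ->
  let T := fun i j => TA i j - TC i j - TR i j in
  T i j + T j i + T ((- i) mod 6) ((- j) mod 6) + T ((- j) mod 6) ((- i) mod 6) = 0.
Proof. table6. Qed.

Lemma table2 : forall i j, 0 <= i < 6 -> 0 <= j < 6 ->
  let T := fun i j => T2 i j - 2 * TR i j in
  T i j + T j i + T ((- i) mod 6) ((- j) mod 6) + T ((- j) mod 6) ((- i) mod 6) = 0.
Proof. table6. Qed.

Lemma piece K N (phi : Z * Z -> Z * Z) (w : Z * Z -> Z) (e : Z * Z -> nat) (T : Z -> Z -> Z) :
  (N < K)%nat ->
  (forall p, Nat.eqb (e p) N = lvl N (phi p)) ->
  (forall p, lvl N (phi p) = true -> w p = T (fst (phi p) mod 6) (snd (phi p) mod 6)) ->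
  (forall p q, phi p = phi q -> p = q) ->
  (forall q, In q (box K) -> T (fst q mod 6) (snd q mod 6) <> 0 -> exists p, In p (box K) /\ phi p = q) ->
  zsumL (box K) (fun p => if Nat.eqb (e p) N then w p else 0) = zsumL (box K) (Fw T N).
Proof.
  intros HK Hexp Hw Hinj Hsurj.
  transitivity (zsumL (box K) (fun p => Fw T N (phi p))).
  - apply zsumL_ext. intros p _. rewrite Hexp. unfold Fw. destruct (lvl N (phi p)) eqn:E; auto.
  - apply reindex_box; auto.
    + intros p _ H. unfold Fw in H. destruct (lvl N (phi p)) eqn:E; [|congruence]. eapply lvl_box; eauto.
    + intros q Hq H. unfold Fw in H. destruct (lvl N q) eqn:E; [|congruence]. auto.
Qed.

Definition eA (n : Z) : nat := Z.to_nat (2 * ((2 * n + 1) * (2 * n + 1))).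
Definition eB (m : Z) : nat := Z.to_nat (2 * ((6 * m) * (6 * m))).
Definition eC (n : Z) : nat := Z.to_nat (2 * ((2 * n) * (2 * n))).
Definition eD (m : Z) : nat := Z.to_nat (2 * ((6 * m + 3) * (6 * m + 3))).
Definition e18 (n : Z) : nat := Z.to_nat (2 * ((3 * n) * (3 * n))).
Definition e2 (m : Z) : nat := Z.to_nat (2 * (m * m)).

Lemma arithA K N : (N < K)%nat ->
  zsumL (box K) (fun p => if Nat.eqb (eA (fst p) + eB (snd p)) N then 1 else 0) = zsumL (box K) (Fw TA N).
Proof.
  intros HK. apply (piece K N (fun p => (2 * fst p + 1, 6 * snd p)) (fun _ => 1) (fun p => (eA (fst p) + eB (snd p))%nat) TA HK).
  - intros [n m]. unfold eA, eB, lvl. cbn [fst snd]. rewrite eqb_to_nat by nia. f_equal. ring.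
  - intros [n m] _. cbn [fst snd]. unfold TA.
    replace (((2 * n + 1) mod 6) mod 2) with 1 by (Z.div_mod_to_equations; lia).
    replace ((6 * m) mod 6) with 0 by (Z.div_mod_to_equations; lia). reflexivity.
  - intros [n m] [n' m'] H. pose proof (f_equal fst H) as E1. pose proof (f_equal snd H) as E2. cbn [fst snd] in E1, E2. f_equal; lia.
  - intros [a b] Hq H. unfold TA in H. cbn [fst snd] in H.
    destruct (Z.eqb_spec ((a mod 6) mod 2) 1); destruct (Z.eqb_spec (b mod 6) 0); simpl in H; try congruence.
    exists ((a - 1) / 2, b / 6). apply in_box in Hq. cbn [fst snd] in Hq. split.
    + apply in_box. cbn [fst snd]. split; Z.div_mod_to_equations; lia.
    + cbn [fst snd]. f_equal; Z.div_mod_to_equations; lia.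
Qed.

Lemma arithC K N : (N < K)%nat ->
  zsumL (box K) (fun p => if Nat.eqb (eC (fst p) + eD (snd p)) N then 1 else 0) = zsumL (box K) (Fw TC N).
Proof.
  intros HK. apply (piece K N (fun p => (2 * fst p, 6 * snd p + 3)) (fun _ => 1) (fun p => (eC (fst p) + eD (snd p))%nat) TC HK).
  - intros [n m]. unfold eC, eD, lvl. cbn [fst snd]. rewrite eqb_to_nat by nia. f_equal. ring.
  - intros [n m] _. cbn [fst snd]. unfold TC.
    replace (((2 * n) mod 6) mod 2) with 0 by (Z.div_mod_to_equations; lia).
    replace ((6 * m + 3) mod 6) with 3 by (Z.div_mod_to_equations; lia). reflexivity.
  - intros [n m] [n' m'] H. pose proof (f_equal fst H) as E1. pose proof (f_equal snd H) as E2. cbn [fst snd] in E1, E2. f_equal; lia.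
  - intros [a b] Hq H. unfold TC in H. cbn [fst snd] in H.
    destruct (Z.eqb_spec ((a mod 6) mod 2) 0); destruct (Z.eqb_spec (b mod 6) 3); simpl in H; try congruence.
    exists (a / 2, (b - 3) / 6). apply in_box in Hq. cbn [fst snd] in Hq. split.
    + apply in_box. cbn [fst snd]. split; Z.div_mod_to_equations; lia.
    + cbn [fst snd]. f_equal; Z.div_mod_to_equations; lia.
Qed.

Lemma arithR K N : (N < K)%nat ->
  zsumL (box K) (fun p => if Nat.eqb (eE (fst p) + eE (snd p)) N then 2 * zsgn (fst p) * zsgn (snd p) else 0)
  = zsumL (box K) (Fw TR N).
Proof.
  intros HK. apply (piece K N (fun p => (3 * (fst p + snd p) + 1, 3 * (fst p - snd p)))
     (fun p => 2 * zsgn (fst p) * zsgn (snd p)) (fun p => (eE (fst p) + eE (snd p))%nat) TR HK).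
  - intros [j k]. unfold eE, lvl. cbn [fst snd]. rewrite eqb_to_nat by nia. f_equal. ring.
  - intros [j k] _. cbn [fst snd]. unfold TR, zsgn.
    destruct (Z.eqb_spec (j mod 2) 0); destruct (Z.eqb_spec (k mod 2) 0); res6; reflexivity.
  - intros [n m] [n' m'] H. pose proof (f_equal fst H) as E1. pose proof (f_equal snd H) as E2. cbn [fst snd] in E1, E2. f_equal; lia.
  - intros [a b] Hq H. unfold TR in H. cbn [fst snd] in H.
    destruct (Z.eqb_spec ((a mod 6) mod 3) 1); destruct (Z.eqb_spec ((b mod 6) mod 3) 0);
      destruct (Z.eqb_spec ((a mod 6 + b mod 6) mod 2) 1); simpl in H; try congruence.
    exists (((a - 1) / 3 + b / 3) / 2, ((a - 1) / 3 - b / 3) / 2).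
    apply in_box in Hq. cbn [fst snd] in Hq. split.
    + apply in_box. cbn [fst snd]. split; Z.div_mod_to_equations; lia.
    + cbn [fst snd]. f_equal; Z.div_mod_to_equations; lia.
Qed.

Lemma arith2 K N : (N < K)%nat ->
  zsumL (box K) (fun p => if Nat.eqb (e18 (fst p) + e2 (snd p)) N then zsgn (fst p) - zsgn (snd p) else 0)
  = zsumL (box K) (Fw T2 N).
Proof.
  intros HK. apply (piece K N (fun p => (3 * fst p, snd p))
     (fun p => zsgn (fst p) - zsgn (snd p)) (fun p => (e18 (fst p) + e2 (snd p))%nat) T2 HK).
  - intros [n m]. unfold e18, e2, lvl. cbn [fst snd]. rewrite eqb_to_nat by nia. f_equal. ring.
  - intros [n m] _. cbn [fst snd]. unfold T2, zsgn.
    replace ((m mod 6) mod 2) with (m mod 2) by (Z.div_mod_to_equations; lia).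
    destruct (Z.eqb_spec (n mod 2) 0); destruct (Z.eqb_spec (m mod 2) 0); res6; reflexivity.
  - intros [n m] [n' m'] H. pose proof (f_equal fst H) as E1. pose proof (f_equal snd H) as E2. cbn [fst snd] in E1, E2. f_equal; lia.
  - intros [a b] Hq H. unfold T2 in H. cbn [fst snd] in H.
    destruct (Z.eqb_spec ((a mod 6) mod 3) 0); simpl in H; try congruence.
    exists (a / 3, b). apply in_box in Hq. cbn [fst snd] in Hq. split.
    + apply in_box. cbn [fst snd]. split; Z.div_mod_to_equations; lia.
    + cbn [fst snd]. f_equal; Z.div_mod_to_equations; lia.
Qed.

Lemma Fw_lin (T1 T2 T3 : Z -> Z -> Z) N p :
  Fw (fun i j => T1 i j - T2 i j - T3 i j) N p = Fw T1 N p - Fw T2 N p - Fw T3 N p.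
Proof. unfold Fw. destruct (lvl N p); ring. Qed.

Lemma Fw_lin2 (T1 T3 : Z -> Z -> Z) N p :
  Fw (fun i j => T1 i j - 2 * T3 i j) N p = Fw T1 N p - 2 * Fw T3 N p.
Proof. unfold Fw. destruct (lvl N p); ring. Qed.

Lemma coef_id1 K N : (N < K)%nat ->
  zsumL (box K) (fun p => if Nat.eqb (eA (fst p) + eB (snd p)) N then 1 * 1 else 0)
  + zsumL (box K) (fun p => if Nat.eqb (eC (fst p) + eD (snd p)) N then -1 * 1 else 0)
  = zsumL (box K) (fun p => if Nat.eqb (eE (fst p) + eE (snd p)) N then 2 * zsgn (fst p) * zsgn (snd p) else 0).
Proof.
  intros HK.
  rewrite (zsumL_ext _ (fun p => if Nat.eqb (eC (fst p) + eD (snd p)) N then -1 * 1 else 0) (fun p => - (if Nat.eqb (eC (fst p) + eD (snd p)) N then 1 else 0)))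
    by (intros p _; destruct (Nat.eqb _ N); reflexivity).
  rewrite zsumL_opp.
  rewrite (zsumL_ext _ (fun p => if Nat.eqb (eA (fst p) + eB (snd p)) N then 1 * 1 else 0) (fun p => if Nat.eqb (eA (fst p) + eB (snd p)) N then 1 else 0))
    by (intros p _; destruct (Nat.eqb _ N); reflexivity).
  rewrite arithA, arithC, arithR by auto.
  pose proof (sym_zero (fun i j => TA i j - TC i j - TR i j) K N table1) as H.
  rewrite (zsumL_ext _ _ (fun p => Fw TA N p + (- Fw TC N p + - Fw TR N p))) in H
    by (intros; rewrite Fw_lin; ring).
  rewrite zsumL_plus, zsumL_plus, !zsumL_opp in H. lia.
Qed.

Lemma coef_id2 K N : (N < K)%nat ->
  zsumL (box K) (fun p => if Nat.eqb (e18 (fst p) + e2 (snd p)) N then zsgn (fst p) * 1 else 0)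
  + zsumL (box K) (fun p => if Nat.eqb (e18 (fst p) + e2 (snd p)) N then -1 * zsgn (snd p) else 0)
  = zsumL (box K) (fun p => if Nat.eqb (eE (fst p) + eE (snd p)) N then 4 * zsgn (fst p) * zsgn (snd p) else 0).
Proof.
  intros HK.
  rewrite <- zsumL_plus.
  rewrite (zsumL_ext _ _ (fun p => if Nat.eqb (e18 (fst p) + e2 (snd p)) N then zsgn (fst p) - zsgn (snd p) else 0))
    by (intros p _; destruct (Nat.eqb _ N); ring).
  rewrite (zsumL_ext _ (fun p => if Nat.eqb (eE (fst p) + eE (snd p)) N then 4 * zsgn (fst p) * zsgn (snd p) else 0)
     (fun p => 2 * (if Nat.eqb (eE (fst p) + eE (snd p)) N then 2 * zsgn (fst p) * zsgn (snd p) else 0)))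
    by (intros p _; destruct (Nat.eqb _ N); ring).
  rewrite zsumL_scal, arith2, arithR by auto.
  pose proof (sym_zero (fun i j => T2 i j - 2 * TR i j) K N table2) as H.
  rewrite (zsumL_ext _ _ (fun p => Fw T2 N p + (-2) * Fw TR N p)) in H
    by (intros; rewrite Fw_lin2; ring).
  rewrite zsumL_plus, zsumL_scal in H. lia.
Qed.

Close Scope Z_scope.
Open Scope R_scope.

Definition mkL (w1 : Z -> Z) (e1 : Z -> nat) (w2 : Z -> Z) (f2 : Z -> nat) K : list (Z * nat) :=
  map (fun p => ((w1 (fst p) * w2 (snd p))%Z, (e1 (fst p) + f2 (snd p))%nat)) (box K).

Lemma Val_mkL x w1 e1 w2 f2 K : Val x (mkL w1 e1 w2 f2 K) =
  (csum (zrange K) (fun n => RtoC (IZR (w1 n)) * x ^ e1 n) * csum (zrange K) (fun m => RtoC (IZR (w2 m)) * x ^ f2 m))%C.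
Proof.
  unfold Val, mkL, box. rewrite csum_map, <- csum_prod. apply csum_ext. intros p _. cbn [fst snd].
  rewrite mult_IZR, RtoC_mult, Cpow_add_r. ring.
Qed.

Lemma Coef_mkL w1 e1 w2 f2 K N : Coef (mkL w1 e1 w2 f2 K) N =
  zsumL (box K) (fun p => if Nat.eqb (e1 (fst p) + f2 (snd p)) N then (w1 (fst p) * w2 (snd p))%Z else 0%Z).
Proof. unfold Coef, mkL. rewrite zsumL_map. reflexivity. Qed.

Lemma Val_app x L1 L2 : Val x (L1 ++ L2) = (Val x L1 + Val x L2)%C.
Proof. unfold Val. apply csum_app. Qed.
Lemma Coef_app L1 L2 N : Coef (L1 ++ L2) N = (Coef L1 N + Coef L2 N)%Z.
Proof. unfold Coef. apply zsumL_app. Qed.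
Lemma Wt_app L1 L2 : Wt (L1 ++ L2) = Wt L1 + Wt L2.
Proof. unfold Wt. apply rsum_app. Qed.

Lemma Wt_mkL w1 e1 w2 f2 K c : (forall n m, Rabs (IZR (w1 n * w2 m)) <= c) ->
  Wt (mkL w1 e1 w2 f2 K) <= c * (4 * (INR K + 1) ^ 2).
Proof.
  intros Hc. unfold Wt, mkL. rewrite rsum_map.
  eapply Rle_trans. apply (rsum_le _ _ (fun _ => c)). intros p _. cbn [fst snd]. rewrite abs_IZR. apply Hc.
  rewrite rsum_const, length_box. rewrite mult_INR, plus_INR, mult_INR. simpl (INR 2). simpl (INR 1).
  assert (0 <= c) by (eapply Rle_trans; [apply Rabs_pos | apply (Hc 0%Z 0%Z)]).
  pose proof (pos_INR K). nra.
Qed.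

Definition one (n : Z) : Z := 1%Z.
Definition mone (n : Z) : Z := (-1)%Z.

Lemma theta_lim tau f w e : 0 < Im tau ->
  (forall n, f n = (RtoC (IZR (w n)) * xx tau ^ e n)%C) -> (forall n, Rabs (IZR (w n)) <= 1) ->
  (forall n, (Z.abs_nat n <= e n)%nat) ->
  is_lim_C (fun K => csum (zrange K) (fun n => RtoC (IZR (w n)) * xx tau ^ e n)%C) (zsum f).
Proof.
  intros Ht Hf Hw He. pose proof (rho_bounds tau Ht).
  eapply is_lim_C_ext. 2: apply (zsum_lim f (rho tau)).
  - intros K. rewrite zpsum_csum. apply csum_ext. intros; auto.
  - lra.
  - intros n. rewrite Hf, <- Cmod_xx. apply term_bound; auto. rewrite Cmod_xx; lra.
Qed.

Lemma csum_neg (l : list Z) (g : Z -> C) :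
  csum l (fun n => RtoC (IZR (mone n)) * g n)%C = (- csum l (fun n => RtoC (IZR (one n)) * g n))%C.
Proof. induction l; simpl. ring. rewrite IHl. unfold mone, one. change (IZR (-1)) with (- IZR 1). rewrite RtoC_opp. ring. Qed.

Lemma csum_scal2 (l : list Z) (c : Z) (g : Z -> C) :
  csum l (fun n => RtoC (IZR (c * zsgn n)) * g n)%C = (RtoC (IZR c) * csum l (fun n => RtoC (IZR (zsgn n)) * g n))%C.
Proof. induction l; simpl. ring. rewrite IHl, mult_IZR, RtoC_mult. ring. Qed.

Lemma sq_bound K : 0 <= (INR K + 1) ^ 2.
Proof. apply pow2_ge_0. Qed.

Theorem lemma132 (tau : C) (Htau : 0 < Im tau) :
  Cminus (Cmult (theta2 (Cmult (RtoC (2/3)) tau)) (theta3 (Cmult (RtoC 6) tau)))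
         (Cmult (theta3 (Cmult (RtoC (2/3)) tau)) (theta2 (Cmult (RtoC 6) tau)))
    = Cmult (RtoC 2) (Cmult (eta tau) (eta tau))
  /\
  Cminus (Cmult (theta4 (Cmult (RtoC (3/2)) tau)) (theta3 (Cmult (RtoC (1/6)) tau)))
         (Cmult (theta3 (Cmult (RtoC (3/2)) tau)) (theta4 (Cmult (RtoC (1/6)) tau)))
    = Cmult (RtoC 4) (Cmult (eta tau) (eta tau)).
Proof.
  pose proof (rho_bounds tau Htau) as Hr.
  pose proof (eta_lim tau Htau) as HE.
  set (x := xx tau) in *.
  assert (Hx1 : Cmod x <= 1) by (unfold x; rewrite Cmod_xx; lra).
  assert (HE' : is_lim_C (fun K => csum (zrange K) (fun j => RtoC (IZR (zsgn j)) * x ^ eE j)%C) (eta tau)).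
  { eapply is_lim_C_ext. 2: exact HE. intros K. rewrite zpsum_csum. reflexivity. }
  assert (Hone : forall n, Rabs (IZR (one n)) <= 1) by (intros; unfold one; rewrite Rabs_R1; lra).
  assert (Hsg : forall n, Rabs (IZR (zsgn n)) <= 1) by apply zsgn_abs1.
  assert (Hlim0 : forall c, is_lim_seq (fun K => c * ((INR K + 1) ^ 2 * rho tau ^ K)) 0).
  { intros c. replace (Finite 0) with (Rbar_mult c 0) by (simpl; f_equal; ring).
    apply is_lim_seq_scal_l. apply quad_geom_lim. lra. }
  split.
  -
    assert (LA : is_lim_C (fun K => csum (zrange K) (fun n => RtoC (IZR (one n)) * x ^ eA n)%C)
                          (theta2 (Cmult (RtoC (2/3)) tau))).
    { apply theta_lim; auto.
      - intros n. unfold one. rewrite (qpow_xx tau (2/3) _ (eA n)). simpl. ring.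
        unfold eA. rewrite INR_Z2N by nia. rewrite !mult_IZR, !plus_IZR, !mult_IZR. field.
      - intros n. unfold eA. nia. }
    assert (LB : is_lim_C (fun K => csum (zrange K) (fun n => RtoC (IZR (one n)) * x ^ eB n)%C)
                          (theta3 (Cmult (RtoC 6) tau))).
    { apply theta_lim; auto.
      - intros n. unfold one. rewrite (qpow_xx tau 6 _ (eB n)). simpl. ring.
        unfold eB. rewrite INR_Z2N by nia. rewrite !mult_IZR. field.
      - intros n. unfold eB. nia. }
    assert (LC : is_lim_C (fun K => csum (zrange K) (fun n => RtoC (IZR (one n)) * x ^ eC n)%C)
                          (theta3 (Cmult (RtoC (2/3)) tau))).
    { apply theta_lim; auto.
      - intros n. unfold one. rewrite (qpow_xx tau (2/3) _ (eC n)). simpl. ring.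
        unfold eC. rewrite INR_Z2N by nia. rewrite !mult_IZR. field.
      - intros n. unfold eC. nia. }
    assert (LD : is_lim_C (fun K => csum (zrange K) (fun n => RtoC (IZR (one n)) * x ^ eD n)%C)
                          (theta2 (Cmult (RtoC 6) tau))).
    { apply theta_lim; auto.
      - intros n. unfold one. rewrite (qpow_xx tau 6 _ (eD n)). simpl. ring.
        unfold eD. rewrite INR_Z2N by nia. rewrite !mult_IZR, !plus_IZR, !mult_IZR. field.
      - intros n. unfold eD. nia. }
    set (LL := fun K => (mkL one eA one eB K ++ mkL mone eC one eD K)%list).
    set (RR := fun K => mkL (fun j => (2 * zsgn j)%Z) eE zsgn eE K).
    assert (HL : is_lim_C (fun K => Val x (LL K))
       (Cminus (Cmult (theta2 (Cmult (RtoC (2/3)) tau)) (theta3 (Cmult (RtoC 6) tau)))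
         (Cmult (theta3 (Cmult (RtoC (2/3)) tau)) (theta2 (Cmult (RtoC 6) tau))))).
    { eapply is_lim_C_ext. 2: apply (is_lim_C_minus _ _ _ _ (is_lim_C_mult _ _ _ _ LA LB) (is_lim_C_mult _ _ _ _ LC LD)).
      intros K. unfold LL. rewrite Val_app, !Val_mkL, csum_neg. ring. }
    assert (HR : is_lim_C (fun K => Val x (RR K)) (Cmult (RtoC 2) (Cmult (eta tau) (eta tau)))).
    { eapply is_lim_C_ext. 2: apply (is_lim_C_mult _ _ _ _ (is_lim_C_const (RtoC 2)) (is_lim_C_mult _ _ _ _ HE' HE')).
      intros K. unfold RR. rewrite Val_mkL, csum_scal2. simpl. ring. }
    assert (Hcl : forall K, Cmod (Val x (LL K) - Val x (RR K)) <= 16 * ((INR K + 1) ^ 2 * rho tau ^ K)).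
    { intros K. eapply Rle_trans. apply (Val_close x K); auto.
      - intros N HN. unfold LL, RR. rewrite Coef_app, !Coef_mkL. apply coef_id1; auto.
      - unfold LL, RR. cbv beta. rewrite Wt_app. unfold x; rewrite Cmod_xx.
        pose proof (Wt_mkL one eA one eB K 1 ltac:(intros; unfold one; simpl; rewrite <- abs_IZR; simpl; lra)).
        pose proof (Wt_mkL mone eC one eD K 1 ltac:(intros; unfold one, mone; simpl; rewrite <- abs_IZR; simpl; lra)).
        pose proof (Wt_mkL (fun j => (2 * zsgn j)%Z) eE zsgn eE K 2
           ltac:(intros; rewrite !mult_IZR, !Rabs_mult; pose proof (Hsg n); pose proof (Hsg m);
                 pose proof (Rabs_pos (IZR (zsgn n))); pose proof (Rabs_pos (IZR (zsgn m))); rewrite Rabs_pos_eq by lra; nra)).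
        pose proof (pow_le (rho tau) K ltac:(lra)). pose proof (sq_bound K). nra. }
    apply (is_lim_C_unique (fun K => Val x (LL K))); auto.
    apply (is_lim_C_close _ _ _ _ HR Hcl (Hlim0 16)).
  -
    assert (LA : is_lim_C (fun K => csum (zrange K) (fun n => RtoC (IZR (zsgn n)) * x ^ e18 n)%C)
                          (theta4 (Cmult (RtoC (3/2)) tau))).
    { apply theta_lim; auto.
      - intros n. rewrite pow_m1_zsgn. rewrite (qpow_xx tau (3/2) _ (e18 n)). reflexivity.
        unfold e18. rewrite INR_Z2N by nia. rewrite !mult_IZR. field.
      - intros n. unfold e18. nia. }
    assert (LB : is_lim_C (fun K => csum (zrange K) (fun n => RtoC (IZR (one n)) * x ^ e2 n)%C)
                          (theta3 (Cmult (RtoC (1/6)) tau))).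
    { apply theta_lim; auto.
      - intros n. unfold one. rewrite (qpow_xx tau (1/6) _ (e2 n)). simpl. ring.
        unfold e2. rewrite INR_Z2N by nia. rewrite !mult_IZR. field.
      - intros n. unfold e2. nia. }
    assert (LC : is_lim_C (fun K => csum (zrange K) (fun n => RtoC (IZR (one n)) * x ^ e18 n)%C)
                          (theta3 (Cmult (RtoC (3/2)) tau))).
    { apply theta_lim; auto.
      - intros n. unfold one. rewrite (qpow_xx tau (3/2) _ (e18 n)). simpl. ring.
        unfold e18. rewrite INR_Z2N by nia. rewrite !mult_IZR. field.
      - intros n. unfold e18. nia. }
    assert (LD : is_lim_C (fun K => csum (zrange K) (fun n => RtoC (IZR (zsgn n)) * x ^ e2 n)%C)
                          (theta4 (Cmult (RtoC (1/6)) tau))).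
    { apply theta_lim; auto.
      - intros n. rewrite pow_m1_zsgn. rewrite (qpow_xx tau (1/6) _ (e2 n)). reflexivity.
        unfold e2. rewrite INR_Z2N by nia. rewrite !mult_IZR. field.
      - intros n. unfold e2. nia. }
    set (LL := fun K => (mkL zsgn e18 one e2 K ++ mkL mone e18 zsgn e2 K)%list).
    set (RR := fun K => mkL (fun j => (4 * zsgn j)%Z) eE zsgn eE K).
    assert (HL : is_lim_C (fun K => Val x (LL K))
       (Cminus (Cmult (theta4 (Cmult (RtoC (3/2)) tau)) (theta3 (Cmult (RtoC (1/6)) tau)))
         (Cmult (theta3 (Cmult (RtoC (3/2)) tau)) (theta4 (Cmult (RtoC (1/6)) tau))))).
    { eapply is_lim_C_ext. 2: apply (is_lim_C_minus _ _ _ _ (is_lim_C_mult _ _ _ _ LA LB) (is_lim_C_mult _ _ _ _ LC LD)).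
      intros K. unfold LL. rewrite Val_app, !Val_mkL, csum_neg. ring. }
    assert (HR : is_lim_C (fun K => Val x (RR K)) (Cmult (RtoC 4) (Cmult (eta tau) (eta tau)))).
    { eapply is_lim_C_ext. 2: apply (is_lim_C_mult _ _ _ _ (is_lim_C_const (RtoC 4)) (is_lim_C_mult _ _ _ _ HE' HE')).
      intros K. unfold RR. rewrite Val_mkL, csum_scal2. simpl. ring. }
    assert (Hcl : forall K, Cmod (Val x (LL K) - Val x (RR K)) <= 24 * ((INR K + 1) ^ 2 * rho tau ^ K)).
    { intros K. eapply Rle_trans. apply (Val_close x K); auto.
      - intros N HN. unfold LL, RR. rewrite Coef_app, !Coef_mkL. apply coef_id2; auto.
      - unfold LL, RR. cbv beta. rewrite Wt_app. unfold x; rewrite Cmod_xx.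
        pose proof (Wt_mkL zsgn e18 one e2 K 1
           ltac:(intros; unfold one; rewrite Z.mul_1_r; apply Hsg)).
        pose proof (Wt_mkL mone e18 zsgn e2 K 1
           ltac:(intros; unfold mone; rewrite mult_IZR, Rabs_mult; rewrite <- (abs_IZR (-1)); simpl (Z.abs (-1)); rewrite Rmult_1_l; apply Hsg)).
        pose proof (Wt_mkL (fun j => (4 * zsgn j)%Z) eE zsgn eE K 4
           ltac:(intros; rewrite !mult_IZR, !Rabs_mult; pose proof (Hsg n); pose proof (Hsg m);
                 pose proof (Rabs_pos (IZR (zsgn n))); pose proof (Rabs_pos (IZR (zsgn m))); rewrite Rabs_pos_eq by lra; nra)).
        pose proof (pow_le (rho tau) K ltac:(lra)). pose proof (sq_bound K). nra. }
    apply (is_lim_C_unique (fun K => Val x (LL K))); auto.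
    apply (is_lim_C_close _ _ _ _ HR Hcl (Hlim0 24)).
Qed.
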